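(* Let $p$ be a prime, $\Delta<0$ a discriminant, and $(A,B,C)\in \mathrm{CL}(\Delta p^2)$. Let $(a,b,c)\in\mathrm{CL}(\Delta)$ be the (unique) class with $(A,B,C)\in\Psi_p(a,b,c)$. Then $$P_{p,0}(A,B,C,q)=(a,b,c,q^{p^2}).$$
   Context: A form $(a,b,c)$ denotes the $SL(2,\mathbb Z)$-equivalence class of the positive definite form $ax^2+bxy+cy^2$ ($a>0$) of discriminant $b^2-4ac<0$; it is primitive if $\gcd(a,b,c)=1$, and $\mathrm{CL}(\Delta)$ is the set of classes of primitive forms of discriminant $\Delta$. The theta series $(a,b,c,q):=\sum_{(x,y)\in\mathbb Z^2}q^{ax^2+bxy+cy^2}$ depends only on the class; $(a,b,c,q^k)$ is this series with $q\mapsto q^k$. For $m\ge1$, $0\le r<m$: $P_{m,r}\sum_{n\ge0}a(n)q^n=\sum_{n\ge0}a(mn+r)q^{mn+r}$. For a prime $p$ and primitive $(a,b,c)$ of discriminant $\Delta$, $\Psi_p(a,b,c)$ is the set of distinct classes of primitive forms occurring in the list $(a,bp,cp^2)$, $(ap^2,\,p(b+2ah),\,ah^2+bh+c)$ ($0\le h<p$) of forms of discriminant $\Delta p^2$. Known fact (Buell): $\Psi_p$ is well defined on classes, and the sets $\Psi_p(f)$, $f\in\mathrm{CL}(\Delta)$, are pairwise disjoint and partition $\mathrm{CL}(\Delta p^2)$; moreover each class of $\Psi_p(a,b,c)$ occurs exactly $w$ times in the list, where $w=3$ if $\Delta=-3$, $w=2$ if $\Delta=-4$, $w=1$ if $\Delta<-4$.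 *)

(* Defs.v *)
From Stdlib Require Import ZArith List Lia Znumtheory.
Open Scope Z_scope.

Definition form := (Z * Z * Z)%type.

Definition qf (f : form) (v : Z * Z) : Z :=
  let '(a, b, c) := f in let '(x, y) := v in a * x ^ 2 + b * x * y + c * y ^ 2.

Definition disc (f : form) : Z := let '(a, b, c) := f in b ^ 2 - 4 * a * c.

Definition primitive (f : form) : Prop :=
  let '(a, b, c) := f in Z.gcd (Z.gcd a b) c = 1.

Definition posdef (f : form) : Prop := let '(a, _, _) := f in 0 < a /\ disc f < 0.

Definition is_neg_disc (D : Z) : Prop := D < 0 /\ (D mod 4 = 0 \/ D mod 4 = 1).

Definition sl2_equiv (f g : form) : Prop :=
  exists al be ga de : Z, al * de - be * ga = 1 /\
    forall x y, qf g (x, y) = qf f (al * x + be * y, ga * x + de * y).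

(* F's class belongs to Psi_p(f): F is equivalent to some primitive form of the list
   (a, b p, c p^2), (a p^2, p (b + 2 a h), a h^2 + b h + c), 0 <= h < p. *)
Definition in_Psi (p : Z) (f F : form) : Prop :=
  let '(a, b, c) := f in
  (primitive (a, b * p, c * p ^ 2) /\ sl2_equiv F (a, b * p, c * p ^ 2)) \/
  (exists h, 0 <= h < p /\
     primitive (a * p ^ 2, p * (b + 2 * a * h), a * h ^ 2 + b * h + c) /\
     sl2_equiv F (a * p ^ 2, p * (b + 2 * a * h), a * h ^ 2 + b * h + c)).

(* Formal power series in q with integer coefficients, as coefficient sequences. *)
Definition series := nat -> Z.

(* For a
   positive definite form every solution satisfies |x|,|y| <= 4(|a|+|c|) n
   (lemma theta_box_complete below), so counting in that box is exact. *)
Definition zrange (N : nat) : list Z :=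
  map (fun k => Z.of_nat k - Z.of_nat N) (seq 0 (2 * N + 1)).

Definition box_bound (f : form) (n : nat) : nat :=
  let '(a, _, c) := f in (4 * (Z.to_nat (Z.abs a) + Z.to_nat (Z.abs c)) * n)%nat.

Definition theta (f : form) : series := fun n =>
  Z.of_nat (length (filter (fun v => Z.eqb (qf f v) (Z.of_nat n))
     (list_prod (zrange (box_bound f n)) (zrange (box_bound f n))))).

Definition Pmr (m r : nat) (s : series) : series :=
  fun n => if Nat.eqb (n mod m) r then s n else 0.

Definition qpow (k : nat) (s : series) : series :=
  fun n => if Nat.eqb (n mod k) 0 then s (n / k)%nat else 0.

Lemma theta_box_complete (f : form) (n : nat) (x y : Z) :
  posdef f -> qf f (x, y) = Z.of_nat n ->
  Z.abs x <= Z.of_nat (box_bound f n) /\ Z.abs y <= Z.of_nat (box_bound f n).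
Proof.
  destruct f as [[a b] c]; unfold posdef, qf, box_bound, disc. intros [Ha Hd] Hq.
  assert (0 <= b ^ 2) by nia.
  assert (Hc : 0 < c).
  { destruct (Z_lt_le_dec 0 c) as [|Hc]; [assumption|].
    assert (a * c <= 0) by (apply Z.mul_nonneg_nonpos; lia).
    assert (4 * a * c = 4 * (a * c)) by ring. lia. }
  rewrite !Nat2Z.inj_mul, Nat2Z.inj_add.
  rewrite !Z2Nat.id by lia.
  assert (Hy : y ^ 2 <= 4 * a * Z.of_nat n).
  { assert (4 * a * (a * x ^ 2 + b * x * y + c * y ^ 2) =
            (2*a*x + b*y)^2 + (4*a*c - b^2) * y^2) by ring. nia. }
  assert (Hx : x ^ 2 <= 4 * c * Z.of_nat n).
  { assert (4 * c * (a * x ^ 2 + b * x * y + c * y ^ 2) =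
            (2*c*y + b*x)^2 + (4*a*c - b^2) * x^2) by ring. nia. }
  assert (Z.abs x <= x ^ 2) by nia. assert (Z.abs y <= y ^ 2) by nia.
  rewrite (Z.abs_eq a), (Z.abs_eq c) by lia.
  assert (0 <= Z.of_nat n) by lia.
  split; nia.
Qed.

(* Main.v *)
Require Import Defs.
From Stdlib Require Import ZArith Znumtheory.
From Stdlib Require Import Arith List Lia.
Open Scope Z_scope.

Lemma nodup_map_inj {A B} (f : A -> B) (l : list A) :
  NoDup l -> (forall x y, In x l -> In y l -> f x = f y -> x = y) -> NoDup (map f l).
Proof.
  induction l as [|x l IH]; simpl; intros Hn Hi; constructor.
  - inversion Hn; subst. intro Hm. apply in_map_iff in Hm as [y [Hy Hyl]].
    assert (y = x) by (apply Hi; auto). subst; contradiction.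
  - inversion Hn; subst. apply IH; auto.
Qed.

Lemma count_le {A} (l1 l2 : list A) (f : A -> A) :
  NoDup l1 -> (forall x y, In x l1 -> In y l1 -> f x = f y -> x = y) ->
  (forall x, In x l1 -> In (f x) l2) -> (length l1 <= length l2)%nat.
Proof.
  intros Hn Hi Hm. rewrite <- (length_map f l1). apply NoDup_incl_length.
  - apply nodup_map_inj; auto.
  - intros y Hy. apply in_map_iff in Hy as [x [<- Hx]]. auto.
Qed.

Lemma nodup_prod {A B} (l : list A) (l' : list B) :
  NoDup l -> NoDup l' -> NoDup (list_prod l l').
Proof.
  induction l as [|x l IH]; simpl; intros Hn Hn'; [constructor|].
  inversion Hn; subst. apply NoDup_app.
  - apply nodup_map_inj; auto. intros ? ? _ _ H; now inversion H.
  - auto.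
  - intros [u v] Hu Hv. apply in_map_iff in Hu as [y [Hy _]]. inversion Hy; subst.
    apply in_prod_iff in Hv as [Hv _]. contradiction.
Qed.

Lemma zrange_nodup N : NoDup (zrange N).
Proof.
  unfold zrange. apply nodup_map_inj. apply seq_NoDup. intros. lia.
Qed.

Lemma in_zrange N z : Z.abs z <= Z.of_nat N -> In z (zrange N).
Proof.
  intros H. unfold zrange. apply in_map_iff. exists (Z.to_nat (z + Z.of_nat N)).
  split. lia. apply in_seq. lia.
Qed.

Definition sols (f : form) (n : nat) :=
  filter (fun v => Z.eqb (qf f v) (Z.of_nat n))
     (list_prod (zrange (box_bound f n)) (zrange (box_bound f n))).

Lemma theta_sols f n : theta f n = Z.of_nat (length (sols f n)).
Proof. reflexivity. Qed.

Lemma sols_nodup f n : NoDup (sols f n).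
Proof. apply NoDup_filter, nodup_prod; apply zrange_nodup. Qed.

Lemma in_sols f n v : In v (sols f n) -> qf f v = Z.of_nat n.
Proof. unfold sols. rewrite filter_In. intros [_ H]. now apply Z.eqb_eq. Qed.

Lemma sols_in f n v : posdef f -> qf f v = Z.of_nat n -> In v (sols f n).
Proof.
  intros Hp Hq. destruct v as [x y]. destruct (theta_box_complete f n x y Hp Hq).
  unfold sols. rewrite filter_In. split. apply in_prod_iff; split; now apply in_zrange.
  now apply Z.eqb_eq.
Qed.

Lemma theta_bij F f n m (phi psi : Z * Z -> Z * Z) :
  posdef F -> posdef f ->
  (forall v, qf F v = Z.of_nat n -> qf f (phi v) = Z.of_nat m) ->
  (forall v v', qf F v = Z.of_nat n -> qf F v' = Z.of_nat n -> phi v = phi v' -> v = v') ->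
  (forall w, qf f w = Z.of_nat m -> qf F (psi w) = Z.of_nat n) ->
  (forall w w', psi w = psi w' -> w = w') ->
  theta F n = theta f m.
Proof.
  intros HF Hf H1 H2 H3 H4. rewrite !theta_sols. f_equal. apply Nat.le_antisymm.
  - apply (count_le _ _ phi). apply sols_nodup.
    + intros x y Hx Hy. apply H2; eapply in_sols; eauto.
    + intros x Hx. apply sols_in; auto. apply H1. eapply in_sols; eauto.
  - apply (count_le _ _ psi). apply sols_nodup.
    + intros x y _ _. apply H4.
    + intros x Hx. apply sols_in; auto. apply H3. eapply in_sols; eauto.
Qed.

Lemma theta_zero F n : (forall v, qf F v <> Z.of_nat n) -> theta F n = 0.
Proof.
  intros H. rewrite theta_sols. destruct (sols F n) as [|v l] eqn:E. reflexivity.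
  exfalso. apply (H v). apply (in_sols F n). rewrite E. now left.
Qed.

Lemma main_gen (p : nat) (F f : form) (T psi : Z * Z -> Z * Z) :
  (1 < p)%nat -> posdef F -> posdef f ->
  (forall v, qf F v = qf f (T v)) ->
  (forall v v', T v = T v' -> v = v') ->
  (forall v, (Z.of_nat p | qf f (T v)) -> (Z.of_nat p | fst (T v)) /\ (Z.of_nat p | snd (T v))) ->
  (forall w, T (psi w) = (Z.of_nat p * fst w, Z.of_nat p * snd w)) ->
  forall n, Pmr p 0 (theta F) n = qpow (p ^ 2) (theta f) n.
Proof.
  intros Hp HF Hf HT Hi Hd Hpsi n. unfold Pmr, qpow.
  assert (HP1 : 1 < Z.of_nat p) by lia.
  remember (Z.of_nat p) as P eqn:HPdef.
  assert (Hsc : forall x y, qf f (P * x, P * y) = P ^ 2 * qf f (x, y)).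
  { clear -f. destruct f as [[a b] c]. intros; unfold qf; ring. }
  assert (Hsol : forall v, (P | qf F v) -> exists w, T v = (P * fst w, P * snd w)
                 /\ qf F v = P ^ 2 * qf f w).
  { intros v Hv. rewrite HT in Hv. destruct (Hd v Hv) as [[x Hx] [y Hy]].
    exists (x, y). simpl. assert (E : T v = (P * x, P * y)).
    { destruct (T v) as [t1 t2]; simpl in *. rewrite Hx, Hy. f_equal; ring. }
    split; auto. rewrite HT, E. apply Hsc. }
  destruct (Nat.eqb_spec (n mod p) 0) as [H0|H0].
  - assert (HPn : (P | Z.of_nat n)).
    { exists (Z.of_nat (n / p)). rewrite HPdef. rewrite <- Nat2Z.inj_mul.
      f_equal. rewrite (Nat.div_mod n p) at 1 by lia. lia. }
    destruct (Nat.eqb_spec (n mod p ^ 2) 0) as [H1|H1].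
    + set (m := (n / p ^ 2)%nat).
      assert (Hnm : Z.of_nat n = P ^ 2 * Z.of_nat m).
      { unfold m. rewrite HPdef. rewrite (Nat.div_mod n (p ^ 2)) at 1 by (apply Nat.pow_nonzero; lia).
        rewrite H1, Nat.add_0_r, Nat2Z.inj_mul, Nat2Z.inj_pow. reflexivity. }
      assert (HP0 : P ^ 2 <> 0) by nia.
      set (phi := fun v => let '(x, y) := T v in (x / P, y / P)).
      apply (theta_bij F f n m phi psi HF Hf).
      * intros v Hv. destruct (Hsol v) as [w [Ew Eq]]. rewrite Hv; auto.
        unfold phi. rewrite Ew. destruct w as [x y]; simpl.
        rewrite !(Z.mul_comm P), !Z.div_mul by lia.
        rewrite Hv, Hnm in Eq. apply Z.mul_cancel_l in Eq; auto.
      * intros v v' Hv Hv' E. apply Hi.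
        destruct (Hsol v) as [w [Ew _]]. rewrite Hv; auto.
        destruct (Hsol v') as [w' [Ew' _]]. rewrite Hv'; auto.
        unfold phi in E. rewrite Ew, Ew' in *. destruct w, w'; simpl in *.
        rewrite !(Z.mul_comm P), !Z.div_mul in E by lia.
        inversion E; subst; reflexivity.
      * intros w Hw. rewrite HT, Hpsi. destruct w; simpl. rewrite Hsc. simpl in Hw.
        rewrite Hw, Hnm. reflexivity.
      * intros w w' E. assert (E2 := f_equal T E). rewrite !Hpsi in E2.
        destruct w, w'; simpl in *. inversion E2.
        f_equal; nia.
    + apply theta_zero. intros v Hv. destruct (Hsol v) as [w [_ Eq]].
      rewrite Hv; auto. apply H1. rewrite Hv in Eq.
      assert (Hd2 : (Z.of_nat (p ^ 2) | Z.of_nat n)).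
      { exists (qf f w). rewrite Eq, Nat2Z.inj_pow, <- HPdef. change (Z.of_nat 2) with 2. ring. }
      apply Nat.Div0.mod_divides. destruct Hd2 as [k Hk].
      assert (0 < Z.of_nat (p ^ 2)) by (rewrite Nat2Z.inj_pow, <- HPdef; lia). exists (Z.to_nat k). assert (0 <= k) by nia. apply Nat2Z.inj. rewrite Nat2Z.inj_mul, Z2Nat.id by lia. lia.
  - destruct (Nat.eqb_spec (n mod p ^ 2) 0) as [H1|H1]; auto.
    exfalso. apply H0. apply Nat.Div0.mod_divides. apply Nat.Div0.mod_divides in H1.
    destruct H1 as [k Hk]. exists (p * k)%nat. rewrite Hk. simpl. ring.
Qed.

Lemma not_div_prim P x y z : 1 < P -> Z.gcd (Z.gcd x y) z = 1 ->
  (P | y) -> (P | z) -> ~ (P | x).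
Proof.
  intros HP Hg Hy Hz Hx. assert (P | 1).
  { rewrite <- Hg. apply Z.gcd_greatest; auto. apply Z.gcd_greatest; auto. }
  apply Z.divide_pos_le in H; lia.
Qed.

Lemma not_div_prim3 P x y z : 1 < P -> Z.gcd (Z.gcd x y) z = 1 ->
  (P | x) -> (P | y) -> ~ (P | z).
Proof.
  intros HP Hg Hx Hy Hz. assert (P | 1).
  { rewrite <- Hg. apply Z.gcd_greatest; auto. apply Z.gcd_greatest; auto. }
  apply Z.divide_pos_le in H; lia.
Qed.

Lemma div_sq P u : prime P -> (P | u * u) -> (P | u).
Proof. intros Hp H. destruct (prime_mult P Hp u u H); auto. Qed.

Section Inv.
Variables al be ga de : Z.
Hypothesis Hdet : al * de - be * ga = 1.
Lemma inv1 x y : al * (de * x - be * y) + be * (- ga * x + al * y) = x.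
Proof. transitivity (x * (al * de - be * ga)); [ring | rewrite Hdet; ring]. Qed.
Lemma inv2 x y : ga * (de * x - be * y) + de * (- ga * x + al * y) = y.
Proof. transitivity (y * (al * de - be * ga)); [ring | rewrite Hdet; ring]. Qed.
Lemma inv3 x y : de * (al * x + be * y) - be * (ga * x + de * y) = x.
Proof. transitivity (x * (al * de - be * ga)); [ring | rewrite Hdet; ring]. Qed.
Lemma inv4 x y : - ga * (al * x + be * y) + al * (ga * x + de * y) = y.
Proof. transitivity (y * (al * de - be * ga)); [ring | rewrite Hdet; ring]. Qed.
End Inv.

Theorem lemma4p3 (p : nat) (D A B C a b c : Z) :
  prime (Z.of_nat p) ->
  is_neg_disc D ->
  0 < A -> primitive (A, B, C) -> disc (A, B, C) = D * Z.of_nat p ^ 2 ->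
  0 < a -> primitive (a, b, c) -> disc (a, b, c) = D ->
  in_Psi (Z.of_nat p) (a, b, c) (A, B, C) ->
  forall n : nat, Pmr p 0 (theta (A, B, C)) n = qpow (p ^ 2) (theta (a, b, c)) n.
Proof.
  intros Hpr [HD _] HA _ HdF Ha _ Hdf HPsi.
  assert (Hp2 := prime_ge_2 _ Hpr).
  assert (Hp1 : (1 < p)%nat) by lia.
  assert (HF : posdef (A, B, C)) by (unfold posdef; split; [lia| rewrite HdF; nia]).
  assert (Hf : posdef (a, b, c)) by (unfold posdef; split; [lia| rewrite Hdf; lia]).
  set (P := Z.of_nat p) in *.
  destruct HPsi as [[Hprim [al [be [ga [de [Hdet Heq]]]]]] |
                    [h [Hh [Hprim [al [be [ga [de [Hdet Heq]]]]]]]]].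
  - unfold primitive in Hprim.
    assert (Hna : ~ (P | a)).
    { apply (not_div_prim P a (b * P) (c * P ^ 2)); auto. lia.
      exists b; ring. exists (c * P); ring. }
    apply (main_gen p (A, B, C) (a, b, c)
      (fun v => (de * fst v - be * snd v, P * (- ga * fst v + al * snd v)))
      (fun w => (al * (P * fst w) + be * snd w, ga * (P * fst w) + de * snd w))); auto;
      change (Z.of_nat p) with P.
    + intros [x y].
      assert (E := Heq (de * x - be * y) (- ga * x + al * y)).
      rewrite (inv1 _ _ _ _ Hdet), (inv2 _ _ _ _ Hdet) in E.
      rewrite <- E. unfold qf; cbn. ring.
    + intros [x y] [x' y'] E. simpl in E. inversion E as [[E1 E2]].
      assert (E3 : - ga * x + al * y = - ga * x' + al * y') by nia.
      f_equal.
      * rewrite <- (inv1 _ _ _ _ Hdet x y), <- (inv1 _ _ _ _ Hdet x' y'), E1, E3. reflexivity.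
      * rewrite <- (inv2 _ _ _ _ Hdet x y), <- (inv2 _ _ _ _ Hdet x' y'), E1, E3. reflexivity.
    + intros [x y]. cbn [qf fst snd]. set (u1 := de * x - be * y). set (u2 := - ga * x + al * y).
      intros Hd. split; [|exists u2; ring].
      apply (div_sq P); auto.
      assert (Hau : (P | a * (u1 * u1))).
      { destruct Hd as [k Hk]. exists (k - b * u1 * u2 - c * P * u2 ^ 2).
        rewrite Z.mul_sub_distr_r, Z.mul_sub_distr_r, <- Hk. ring. }
      destruct (prime_mult P Hpr _ _ Hau); auto. contradiction.
    + intros [x y]. simpl. rewrite (inv3 _ _ _ _ Hdet), (inv4 _ _ _ _ Hdet). reflexivity.
  - unfold primitive in Hprim.
    assert (Hna : ~ (P | a * h ^ 2 + b * h + c)).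
    { apply (not_div_prim3 P (a * P ^ 2) (P * (b + 2 * a * h))); auto. lia.
      exists (a * P); ring. exists (b + 2 * a * h); ring. }
    apply (main_gen p (A, B, C) (a, b, c)
      (fun v => (P * (de * fst v - be * snd v) + h * (- ga * fst v + al * snd v), - ga * fst v + al * snd v))
      (fun w => (al * (fst w - h * snd w) + be * (P * snd w), ga * (fst w - h * snd w) + de * (P * snd w)))); auto;
      change (Z.of_nat p) with P.
    + intros [x y].
      assert (E := Heq (de * x - be * y) (- ga * x + al * y)).
      rewrite (inv1 _ _ _ _ Hdet), (inv2 _ _ _ _ Hdet) in E.
      rewrite <- E. unfold qf; cbv beta iota zeta. cbn [fst snd]. ring.
    + intros [x y] [x' y'] E. simpl in E. inversion E as [[E1 E3]].
      assert (E2 : de * x - be * y = de * x' - be * y') by nia.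
      f_equal.
      * rewrite <- (inv1 _ _ _ _ Hdet x y), <- (inv1 _ _ _ _ Hdet x' y'), E2, E3. reflexivity.
      * rewrite <- (inv2 _ _ _ _ Hdet x y), <- (inv2 _ _ _ _ Hdet x' y'), E2, E3. reflexivity.
    + intros [x y]. cbn [qf fst snd]. set (u1 := de * x - be * y). set (u2 := - ga * x + al * y).
      intros Hd.
      assert (Hu2 : (P | u2)).
      { apply (div_sq P); auto.
        assert (Hau : (P | (a * h ^ 2 + b * h + c) * (u2 * u2))).
        { destruct Hd as [k Hk]. exists (k - (a * P * u1 ^ 2 + 2 * a * u1 * h * u2 + b * u1 * u2)).
          rewrite Z.mul_sub_distr_r, <- Hk. ring. }
        destruct (prime_mult P Hpr _ _ Hau); auto. contradiction. }
      split; auto. apply Z.divide_add_r. exists u1; ring. now apply Z.divide_mul_r.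
    + intros [x y]. simpl. rewrite (inv3 _ _ _ _ Hdet), (inv4 _ _ _ _ Hdet). f_equal; ring.
Qed.
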